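(* Let $V\neq\emptyset$, let $\kappa$ be a cardinal with $|V|\ge\kappa\ge\aleph_0$, and let $F\colon V\leadsto V$ be a strict multifunction. Then $\mathrm{Wall}_{\kappa}(F,V)$ is a proper filter on $V$.
   Context: A multifunction $F\colon V\leadsto V$ is a map $V\to P(V)$; it is strict if $F(v)\neq\emptyset$ for all $v$. For $B\subset V$, $F_{+}(B)=\{x\in V\mid F(x)\subset B\}$. $\mathrm{Wall}_{\kappa}(F,V)=\{U\subset V\mid |V\setminus F_{+}(U)|<\kappa\}$. A filter on $V$ is a nonempty family $\Phi\subset P(V)$ such that for all $A,B\subset V$: $A\in\Phi$ and $B\in\Phi$ iff $A\cap B\in\Phi$; it is proper if $\emptyset\notin\Phi$. *)

(* Defs.v *)
From HB Require Import structures.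
From mathcomp Require Import all_boot all_order all_algebra.
From mathcomp Require Import boolp classical_sets functions cardinality.
Set Implicit Arguments. Unset Strict Implicit. Unset Printing Implicit Defensive.
Local Open Scope classical_set_scope.
Local Open Scope card_scope.

Definition multifun (V : Type) := V -> set V.

Definition strict_mf (V : Type) (F : multifun V) := forall v : V, F v != set0.

Definition Fplus (V : Type) (F : multifun V) (B : set V) : set V :=
  [set x | F x `<=` B].

(* A cardinal kappa is represented as the cardinality of a set K : set Kt.
   |S| < kappa  :=  |S| <= |K| and not |K| <= |S|. *)
Definition card_lt_set (V Kt : Type) (S : set V) (K : set Kt) :=
  (S #<= K) /\ ~ (K #<= S).

Definition Wall (V Kt : Type) (K : set Kt) (F : multifun V) : set (set V) :=
  [set U | card_lt_set (~` Fplus F U) K].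

Definition is_filter (V : Type) (Phi : set (set V)) :=
  Phi != set0 /\ forall A B : set V, (Phi A /\ Phi B) <-> Phi (A `&` B).

Definition proper_filter (V : Type) (Phi : set (set V)) :=
  is_filter Phi /\ ~ Phi set0.

(* Main.v *)
Require Import Defs.
From mathcomp Require Import all_boot all_order all_algebra.
From mathcomp Require Import boolp classical_sets functions cardinality.
From mathcomp Require Import zify.
Local Open Scope classical_set_scope.
Local Open Scope card_scope.
Lemma card_le_of T U (A : set T) (B : set U) (f : T -> U) :
  (forall x, A x -> B (f x)) -> {in A &, injective f} -> A #<= B.
Proof.
move=> fAB finj.
have h1 : A #<= f @` A.
  by have := inj_card_eq finj; rewrite card_eq_sym card_eq_le => /andP[].
apply: card_le_trans h1 _; apply: subset_card_le => _ [x Ax <-]; exact: fAB.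
Qed.

Lemma card_le_ex T U (A : set T) (B : set U) : A #<= B -> B !=set0 ->
  exists f : T -> U, (forall x, A x -> B (f x)) /\ {in A &, injective f}.
Proof.
elim/Ppointed: U B => U B AB [b Bb]; first by case: (no b).
move/pcard_leP: AB => /injfunPex[f ff fi]; exists f; split => //.
Qed.

Arguments card_le_ex {T U A B}.

Lemma rel_card_le T U (A : set T) (B : set U) (G : set (T*U)) :
  (forall a b, G (a,b) -> B b) ->
  (forall a a' b, G (a,b) -> G (a',b) -> a = a') ->
  (forall a, A a -> exists b, G (a,b)) -> A #<= B.
Proof.
move=> GB Ginj Gtot.
case: (pselect (A !=set0)) => [[a0 Aa0]|A0]; last first.
  have -> : A = set0 by apply/seteqP; split=> x // Ax; apply: A0; exists x.
  exact: card_ge0.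
have [b0 _] := Gtot _ Aa0.
have [f fP] : {f : T -> U & forall a, (exists b', G (a,b')) -> G (a, f a)}.
  apply: (@choice _ _ (fun a b => (exists b', G (a,b')) -> G (a, b))).
  move=> a; case: (pselect (exists b', G (a,b'))) => [[b' H]|N].
    by exists b'.
  by exists b0 => H; case: N.
apply: (@card_le_of _ _ A B f).
  by move=> x Ax; apply: (GB x); apply: fP; apply: Gtot.
move=> x y /set_mem Ax /set_mem Ay fxy.
apply: (Ginj _ _ (f x)); first by apply: fP; apply: Gtot.
by rewrite fxy; apply: fP; apply: Gtot.
Qed.
Lemma card_le_total T U (A : set T) (B : set U) : A #<= B \/ B #<= A.
Proof.
pose P (G : set (T*U)) := [/\ forall a b, G (a,b) -> A a /\ B b,
  forall a b b', G (a,b) -> G (a,b') -> b = b' &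
  forall a a' b, G (a,b) -> G (a',b) -> a = a'].
have [G [[GAB Gf Gi] Gmax]] : exists G, P G /\ forall G', G `<` G' -> ~ P G'.
  apply: Zorn_bigcup => F FP Ftot; split.
  - move=> a b [X FX XG]; have [h _ _] := FP _ FX; exact: h.
  - move=> a b b' [X FX Xab] [Y FY Yab']; have [XY|YX] := Ftot _ _ FX FY.
    + have [_ f _] := FP _ FY; exact: f (XY _ Xab) Yab'.
    + have [_ f _] := FP _ FX; exact: f Xab (YX _ Yab').
  - move=> a a' b [X FX Xab] [Y FY Yab']; have [XY|YX] := Ftot _ _ FX FY.
    + have [_ _ f] := FP _ FY; exact: f (XY _ Xab) Yab'.
    + have [_ _ f] := FP _ FX; exact: f Xab (YX _ Yab').
case: (pselect (forall a, A a -> exists b, G (a,b))) => [Htot|NA].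
  by left; apply: (@rel_card_le _ _ A B G) => // a b /GAB[].
case: (pselect (forall b, B b -> exists a, G (a,b))) => [Htot|NB].
  right; apply: (@rel_card_le _ _ B A [set p | G (p.2,p.1)]) => //=.
  - by move=> a b /GAB[].
  - by move=> a a' b; apply: Gf.
exfalso.
move/existsNP: NA => [a /not_implyP[Aa na]].
move/existsNP: NB => [b /not_implyP[Bb nb]].
apply: (Gmax (G `|` [set (a,b)])).
- split; first by move=> ? ?; left.
  move=> /(_ (a,b) (or_intror erefl)) Gab; by apply: na; exists b.
- split.
  + move=> a' b' [/GAB //|E]; by case: E => -> ->.
  + move=> a1 b1 b2 [H1|E1] [H2|E2];
    [|case: E2 => ??|case: E1 => ??|case: E1 => ??; case: E2 => ??]; subst.
    * exact: Gf H1 H2.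
    * by case: na; exists b1.
    * by case: na; exists b2.
    * by [].
  + move=> a1 a2 b1 [H1|E1] [H2|E2];
    [|case: E2 => ??|case: E1 => ??|case: E1 => ??; case: E2 => ??]; subst.
    * exact: Gi H1 H2.
    * by case: nb; exists a1.
    * by case: nb; exists a2.
    * by [].
Qed.

Lemma absorb_core T (X : set T) : infinite_set X ->
  exists g : bool -> T -> T, (forall b x, X x -> X (g b x)) /\
    (forall b b' x x', X x -> X x' -> g b x = g b' x' -> b = b' /\ x = x').
Proof.
move=> Xinf.
pose P (G : set (T*bool*T)) :=
  [/\ (forall x b y, G ((x,b),y) -> X x /\ X y),
      (forall x b y y', G ((x,b),y) -> G ((x,b),y') -> y = y'),
      (forall x b x' b' y, G ((x,b),y) -> G ((x',b'),y) -> x = x' /\ b = b'),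
      (forall x b y, G ((x,b),y) -> forall b', exists y', G ((x,b'),y')) &
      (forall x b y, G ((x,b),y) -> exists y', G ((y,false),y'))].
have [G [[GX Gf Gi Gt Gim] Gmax]] : exists G, P G /\ forall G', G `<` G' -> ~ P G'.
  apply: Zorn_bigcup => F FP Ftot; split.
  - move=> x b y [Y FY YG]; have [h _ _ _ _] := FP _ FY; exact: h YG.
  - move=> x b y y' [X1 FX1 H1] [X2 FX2 H2]; have [S12|S21] := Ftot _ _ FX1 FX2.
    + have [_ f _ _ _] := FP _ FX2; exact: f (S12 _ H1) H2.
    + have [_ f _ _ _] := FP _ FX1; exact: f H1 (S21 _ H2).
  - move=> x b x' b' y [X1 FX1 H1] [X2 FX2 H2]; have [S12|S21] := Ftot _ _ FX1 FX2.
    + have [_ _ f _ _] := FP _ FX2; exact: f (S12 _ H1) H2.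
    + have [_ _ f _ _] := FP _ FX1; exact: f H1 (S21 _ H2).
  - move=> x b y [X1 FX1 H1] b'; have [_ _ _ f _] := FP _ FX1.
    by have [y' H'] := f _ _ _ H1 b'; exists y', X1.
  - move=> x b y [X1 FX1 H1]; have [_ _ _ _ f] := FP _ FX1.
    by have [y' H'] := f _ _ _ H1; exists y', X1.
pose D := [set x | exists y, G ((x,false),y)].
have DX : forall x, D x -> X x by move=> x [y /GX[]].
have GD : forall x b y, G ((x,b),y) -> D x.
  by move=> x b y /Gt/(_ false).
have GDy : forall x b y, G ((x,b),y) -> D y.
  by move=> x b y /Gim.
have Rfin : finite_set (X `\` D).
  apply: contrapT => Rinf.
  have [e [eR einj]] := card_le_ex (proj1 (infiniteP _) Rinf) (infinite_setN0 Rinf).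
  have einj' : injective e by move=> m n; apply: einj; rewrite inE.
  pose G' := G `|` [set p | exists n (b : bool), p = ((e n, b), e (2 * n + b)%N)].
  have eND : forall n, ~ D (e n) by move=> n; have [] := eR n I.
  have eX : forall n, X (e n) by move=> n; have [] := eR n I.
  apply: (Gmax G'); first split.
  - by move=> p Gp; left.
  - move=> /(_ ((e 0, false), e (2 * 0 + false)%N)) H.
    have : G' ((e 0, false), e (2 * 0 + false)%N) by right; exists 0%N, false.
    by move=> /H /GD /eND.
  split.
  - move=> x b y [/GX //|[n [b' E]]]; case: E => -> _ ->; split; exact: eX.
  - move=> x b y y' [H1|[n [b1 E1]]] [H2|[m [b2 E2]]].
    + exact: Gf H1 H2.
    + by case: E2 => E _ _; case: (eND m); rewrite -E; apply: GD H1.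
    + by case: E1 => E _ _; case: (eND n); rewrite -E; apply: GD H2.
    + case: E1 => ? ? ?; subst x b y.
      by case: E2 => /einj' <- <- ->.
  - move=> x b x' b' y [H1|[n [b1 E1]]] [H2|[m [b2 E2]]].
    + exact: Gi H1 H2.
    + by case: E2 => _ _ E; case: (eND (2 * m + b2)%N); rewrite -E; apply: GDy H1.
    + by case: E1 => _ _ E; case: (eND (2 * n + b1)%N); rewrite -E; apply: GDy H2.
    + case: E1 => ? ? ?; subst x b y.
      case: E2 => ? ? /einj' H; subst x' b'.
      have [nm bb] : n = m /\ b1 = b2.
        by case: b1 b2 H => -[] /= H; [split => //; lia|exfalso; lia|exfalso; lia|split => //; lia].
      by subst.
  - move=> x b y [H1|[n [b1 E1]]] b'.
    + by have [y' H'] := Gt _ _ _ H1 b'; exists y'; left.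
    + case: E1 => -> _ _; exists (e (2 * n + b')%N); right; by exists n, b'.
  - move=> x b y [H1|[n [b1 E1]]].
    + by have [y' H'] := Gim _ _ _ H1; exists y'; left.
    + case: E1 => _ _ ->; exists (e (2 * (2 * n + b1) + false)%N); right.
      by exists (2 * n + b1)%N, false.
have Dinf : infinite_set D.
  move=> Dfin; apply: Xinf; apply: (@sub_finite_set _ _ (D `|` (X `\` D))).
    by move=> x Xx; case: (pselect (D x)) => Dx; [left|right].
  by rewrite finite_setU.
have [d0 Dd0] := infinite_setN0 Dinf.
have [h hP] : {h : bool * T -> T & forall p, D p.2 -> G ((p.2, p.1), h p)}.
  apply: (@choice _ _ (fun p y => D p.2 -> G ((p.2, p.1), y))) => -[b x] /=.
  case: (pselect (D x)) => Dx; last by exists d0.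
  case: (Dx) => y0 H0; have [y' H'] := Gt _ _ _ H0 b; by exists y'.
have hD : forall b x, D x -> D (h (b, x)).
  by move=> b x Dx; apply: (GDy x b); apply: (hP (b, x)).
have hinj : forall b b' x x', D x -> D x' -> h (b, x) = h (b', x') -> b = b' /\ x = x'.
  move=> b b' x x' Dx Dx' E.
  have H1 := hP (b, x) Dx; have H2 := hP (b', x') Dx'; rewrite /= E in H1.
  by have [] := Gi _ _ _ _ _ H1 H2.
have RD : (X `\` D) `*` [set: bool] #<= D.
  have [n le] := proj1 (finite_set_leP _) (finite_setX Rfin (@finite_finset bool setT)).
  apply: card_le_trans le _; apply: card_le_trans (proj1 (infiniteP _) Dinf).
  exact: subset_card_le.
have [r [rD rinj]] := card_le_ex RD (ex_intro _ d0 Dd0).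
exists (fun b x => if pselect (D x) then h (false, h (b, x)) else h (true, r (x, b))).
split.
  move=> b x Xx; case: pselect => Dx; apply: (DX); apply: (hD); first exact: (hD).
  by apply: (rD (x, b)).
move=> b b' x x' Xx Xx'; case: pselect => Dx; case: pselect => Dx'.
- move=> E; have [_ E'] := hinj _ _ _ _ ((hD) _ _ Dx) ((hD) _ _ Dx') E.
  exact: hinj _ _ _ _ Dx Dx' E'.
- move=> E; have Rx' : D (r (x', b')) by apply: (rD (x', b')).
  by have [] := hinj _ _ _ _ ((hD) _ _ Dx) Rx' E.
- move=> E; have Rx : D (r (x, b)) by apply: (rD (x, b)).
  by have [] := hinj _ _ _ _ Rx ((hD) _ _ Dx') E.
- move=> E; have Rx' : D (r (x', b')) by apply: (rD (x', b')).
  have Rx : D (r (x, b)) by apply: (rD (x, b)).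
  have [_ E'] := hinj _ _ _ _ Rx Rx' E.
  have := rinj (x, b) (x', b'); rewrite !inE => /(_ (conj (conj Xx Dx) I) (conj (conj Xx' Dx') I) E').
  by case=> -> ->.
Qed.
Lemma card_le_setU T U (X : set T) (A B : set U) :
  infinite_set X -> A #<= X -> B #<= X -> A `|` B #<= X.
Proof.
move=> Xinf AX BX.
have ne := infinite_setN0 Xinf.
have [g [gX ginj]] := @absorb_core _ X Xinf.
have [fa [faX fainj]] := card_le_ex AX ne.
have [fb [fbX fbinj]] := card_le_ex BX ne.
apply: (@card_le_of _ _ _ X (fun u => if pselect (A u) then g false (fa u) else g true (fb u))).
  move=> u ABu; case: pselect => Au; apply: gX; first exact: faX.
  by apply: fbX; case: ABu.
move=> u v /set_mem ABu /set_mem ABv; case: pselect => Au; case: pselect => Av.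
- move=> E; have [_ E'] := ginj _ _ _ _ (faX _ Au) (faX _ Av) E.
  exact: fainj (mem_set Au) (mem_set Av) E'.
- have Bv : B v by case: ABv.
  by move=> E; have [] := ginj _ _ _ _ (faX _ Au) (fbX _ Bv) E.
- have Bu : B u by case: ABu.
  by move=> E; have [] := ginj _ _ _ _ (fbX _ Bu) (faX _ Av) E.
- have Bv : B v by case: ABv.
  have Bu : B u by case: ABu.
  move=> E; have [_ E'] := ginj _ _ _ _ (fbX _ Bu) (fbX _ Bv) E.
  exact: fbinj (mem_set Bu) (mem_set Bv) E'.
Qed.

Lemma Fplus_setI V (F : multifun V) (A B : set V) :
  ~` Fplus F (A `&` B) = ~` Fplus F A `|` ~` Fplus F B.
Proof.
apply/seteqP; split => x /=.
  move=> N; apply: contrapT => /not_orP[/contrapT HA /contrapT HB]; apply: N.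
  by move=> y Fy; split; [apply: HA|apply: HB].
by case=> N H; apply: N => y /H [].
Qed.

Theorem lemma6p6 (V : Type) (Kt : Type) (K : set Kt) (F : multifun V) :
  [set: V] != set0 ->
  infinite_set K ->
  K #<= [set: V] ->
  strict_mf F ->
  proper_filter (Wall K F).
Proof.
move=> _ Kinf KV Fs.
have Kn0 : ~ (K #<= @set0 V).
  by move=> /(card_le0P V K) K0; apply: Kinf; rewrite K0; exact: finite_set0.
split; last first.
  rewrite /Wall /card_lt_set /= => -[_]; apply.
  apply: card_le_trans KV _; apply: subset_card_le => x _ Fx.
  have /set0P [y Fy] := Fs x.
  exact: Fx _ Fy.
split.
  apply/set0P; exists setT; rewrite /Wall /card_lt_set /=.
  have -> : ~` Fplus F setT = set0.
    by apply/seteqP; split => x //=; apply; move=> y.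
  by split; [exact: card_ge0|].
move=> A B; rewrite /Wall /card_lt_set /= Fplus_setI.
set SA := ~` Fplus F A; set SB := ~` Fplus F B.
split.
- move=> [[AK nKA] [BK nKB]]; split; first exact: card_le_setU.
  move=> KAB.
  have key : forall S1 S2 : set V, S1 #<= S2 -> ~ (K #<= S2) -> K #<= S1 `|` S2 -> False.
    move=> S1 S2 le12 nK2 K12.
    case: (pselect (finite_set S2)) => S2fin.
      apply: Kinf; apply: card_le_finite K12 _; rewrite finite_setU; split => //.
      exact: card_le_finite le12 S2fin.
    by apply: nK2; apply: card_le_trans K12 _; apply: card_le_setU => //; exact: card_lexx.
  case: (card_le_total _ _ SA SB) => le.
    exact: key le nKB KAB.
  by apply: (key _ _ le nKA); rewrite setUC.
- move=> [ABK nKAB]; split; split.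
  + exact: card_le_trans (subset_card_le (@subsetUl _ SA SB)) ABK.
  + by move=> KA; apply: nKAB; apply: card_le_trans KA (subset_card_le (@subsetUl _ SA SB)).
  + exact: card_le_trans (subset_card_le (@subsetUr _ SA SB)) ABK.
  + by move=> KB; apply: nKAB; apply: card_le_trans KB (subset_card_le (@subsetUr _ SA SB)).
Qed.
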